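(* For $m=3$ objects, the game for SumLoss with top-1 feedback and binary relevance (loss matrix $L$ and feedback matrix $H$ as in the context) does not satisfy the local observability condition: there exists a pair of neighboring actions $i,j$ such that $\ell_i-\ell_j\notin\bigoplus_{k\in N^+_{i,j}}\mathrm{Col}(S_k^\top)$.
   Context: Objects are $\{1,\dots,m\}$. Learner actions are permutations $\sigma_1,\dots,\sigma_{m!}$ of $[m]$ ($\sigma(i)$ = rank of object $i$, $\sigma^{-1}(j)$ = object at rank $j$); adversary actions are $r_1,\dots,r_{2^m}$ enumerating $\{0,1\}^m$. Loss matrix: $L_{i,j}=\sum_{k=1}^m\sigma_i(k)r_j(k)$, rows $\ell_i$. Feedback matrix: $H_{i,j}=r_j(\sigma_i^{-1}(1))$. Signal matrix $S_i\in\{0,1\}^{2\times2^m}$: $(S_i)_{1,\ell}=\mathbb{1}(H_{i,\ell}=0)$, $(S_i)_{2,\ell}=\mathbb{1}(H_{i,\ell}=1)$. With $\Delta$ the probability simplex in $\mathbb{R}^{2^m}$, $C_i=\{p\in\Delta:\ell_i\cdot p\le\ell_k\cdot p\ \forall k\}$; action $i$ is Pareto-optimal if $C_i$ is non-empty and $(2^m-1)$-dimensional; Pareto-optimal $i,j$ are neighboring if $C_i\cap C_j$ is a $(2^m-2)$-dimensional polytope, and then $N^+_{i,j}=\{k\in[m!]:C_i\cap C_j\subseteq C_k\}$. A neighboring pair $i,j$ is locally observable if $\ell_i-\ell_j\in\bigoplus_{k\in N^+_{i,j}}\mathrm{Col}(S_k^\top)$; local observability holds if every neighboring pair is locally observable.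 *)

(* Defs.v *)
From HB Require Import structures.
From mathcomp Require Import all_boot all_order all_fingroup all_algebra.
From mathcomp Require Import reals.
Set Implicit Arguments. Unset Strict Implicit. Unset Printing Implicit Defensive.
Import Order.TTheory GRing.Theory Num.Theory.
Local Open Scope ring_scope.

Definition aff_indep (R : fieldType) (d e : nat) (P : 'I_e.+1 -> 'rV[R]_d) :=
  row_free (\matrix_(i < e) (P (lift ord0 i) - P ord0)).

(* S is nonempty and its affine hull has dimension e: S contains e+1
   affinely independent points but not e+2 affinely independent points. *)
Definition has_dim (R : fieldType) (d : nat) (S : 'rV[R]_d -> Prop) (e : nat) :=
  (exists P : 'I_e.+1 -> 'rV[R]_d, (forall i, S (P i)) /\ aff_indep P) /\
  ~ (exists P : 'I_e.+2 -> 'rV[R]_d, (forall i, S (P i)) /\ aff_indep P).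

Definition dotv (R : pzRingType) (d : nat) (u v : 'rV[R]_d) : R :=
  \sum_(j < d) u 0 j * v 0 j.

Definition simplex (R : realFieldType) (d : nat) (p : 'rV[R]_d) : Prop :=
  (forall j, 0 <= p 0 j) /\ \sum_(j < d) p 0 j = 1.

(* m = n.+1 objects, 0-indexed as 'I_m; learner actions are the
   permutations s : 'S_m (the learner's action set, indexed directly by the
   permutations instead of by 1..m!); the rank of object k is (s k).+1,
   and s^-1 ord0 is the object placed at rank 1. *)

Section Game.
Variables (R : realType) (n : nat).
Local Notation m := n.+1.

Definition nadv := (2 ^ m)%N.

(* Adversary action r_j, j : 'I_(2^m) (0-indexed): the binary expansion
   of j, an enumeration of {0,1}^m. *)
Definition radv (j : 'I_nadv) (k : 'I_m) : bool := odd (j %/ 2 ^ k).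

Definition lrow (s : 'S_m) : 'rV[R]_nadv :=
  \row_(j < nadv) \sum_(k < m) ((s k).+1)%:R * (radv j k)%:R.

Definition feedback (s : 'S_m) (j : 'I_nadv) : bool := radv j (s^-1 ord0)%g.

Definition signal (s : 'S_m) : 'M[R]_(2, nadv) :=
  \matrix_(a < 2, j < nadv)
    (if a == 0 :> nat then (~~ feedback s j)%:R else (feedback s j)%:R).

Definition cell (s : 'S_m) (p : 'rV[R]_nadv) : Prop :=
  simplex p /\ forall t : 'S_m, dotv (lrow s) p <= dotv (lrow t) p.

Definition pareto (s : 'S_m) : Prop := has_dim (cell s) nadv.-1.

(* C_s \cap C_t is a (2^m - 2)-dimensional polytope (it is automatically a
   polytope, being a bounded intersection of half-spaces). *)
Definition neighbors (s t : 'S_m) : Prop :=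
  pareto s /\ pareto t /\
  has_dim (fun p => cell s p /\ cell t p) nadv.-2.

Definition in_Nplus (s t k : 'S_m) : Prop :=
  forall p, cell s p /\ cell t p -> cell k p.

(* l_s - l_t lies in the sum over k in N^+_{s,t} of Col(S_k^T), i.e. of the
   row spaces of the S_k.  N is the (unique) set N^+_{s,t}. *)
Definition locally_observable_pair (s t : 'S_m) : Prop :=
  forall N : {set 'S_m}, (forall k, k \in N <-> in_Nplus s t k) ->
    (lrow s - lrow t <= \sum_(k in N) <<signal k>>)%MS.

Definition local_observability : Prop :=
  forall s t, neighbors s t -> locally_observable_pair s t.

End Game.

(* Main.v *)
Require Import Defs.
From HB Require Import structures.
From mathcomp Require Import all_boot all_order all_fingroup all_algebra.
From mathcomp Require Import reals.
From mathcomp Require Import ring lra.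
Set Implicit Arguments. Unset Strict Implicit. Unset Printing Implicit Defensive.
Import Order.TTheory GRing.Theory Num.Theory.
Local Open Scope ring_scope.

Notation D8 := (nadv 2).
Definition i0 : 'I_3 := @Ordinal 3 0 isT.
Definition i1 : 'I_3 := @Ordinal 3 1 isT.
Definition i2 : 'I_3 := @Ordinal 3 2 isT.

Definition qv (R : realType) (p : 'rV[R]_D8) (k : 'I_3) : R :=
  \sum_(j < D8) p 0 j * (radv j k)%:R.

Lemma sum3 (R : realType) (F : 'I_3 -> R) : \sum_(k < 3) F k = F i0 + F i1 + F i2.
Proof.
rewrite !big_ord_recl big_ord0 addr0 addrA.
by congr (F _ + F _ + F _); apply: val_inj.
Qed.

Lemma dotv_lrow (R : realType) (u : 'S_3) (p : 'rV[R]_D8) :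
  dotv (lrow R u) p = (u i0).+1%:R * qv p i0 + (u i1).+1%:R * qv p i1
     + (u i2).+1%:R * qv p i2.
Proof.
rewrite /dotv /qv.
have -> : \sum_(j < D8) lrow R u 0 j * p 0 j =
   \sum_(k < 3) (u k).+1%:R * \sum_(j < D8) p 0 j * (radv j k)%:R.
  rewrite (eq_bigr (fun j => \sum_(k < 3) (u k).+1%:R * (p 0 j * (radv j k)%:R))).
    rewrite exchange_big /=; apply: eq_bigr => k _; by rewrite mulr_sumr.
  move=> j _; rewrite mxE mulr_suml; apply: eq_bigr => k _; ring.
by rewrite sum3.
Qed.

Lemma perm3_vals (u : 'S_3) :
  [/\ nat_of_ord (u i0) = 0, nat_of_ord (u i1) = 1 & nat_of_ord (u i2) = 2]%N \/
  [/\ nat_of_ord (u i0) = 0, nat_of_ord (u i1) = 2 & nat_of_ord (u i2) = 1]%N \/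
  [/\ nat_of_ord (u i0) = 1, nat_of_ord (u i1) = 0 & nat_of_ord (u i2) = 2]%N \/
  [/\ nat_of_ord (u i0) = 1, nat_of_ord (u i1) = 2 & nat_of_ord (u i2) = 0]%N \/
  [/\ nat_of_ord (u i0) = 2, nat_of_ord (u i1) = 0 & nat_of_ord (u i2) = 1]%N \/
  [/\ nat_of_ord (u i0) = 2, nat_of_ord (u i1) = 1 & nat_of_ord (u i2) = 0]%N.
Proof.
have d : forall x y : 'I_3, x != y -> nat_of_ord (u x) != nat_of_ord (u y).
  by move=> x y; rewrite (inj_eq val_inj) (inj_eq (@perm_inj _ u)).
have := d i0 i1 isT; have := d i0 i2 isT; have := d i1 i2 isT.
have := ltn_ord (u i0); have := ltn_ord (u i1); have := ltn_ord (u i2).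
move: (nat_of_ord (u i0)) (nat_of_ord (u i1)) (nat_of_ord (u i2)).
case=> [|[|[|a]]]; case=> [|[|[|b]]]; case=> [|[|[|c]]] //=.
all: move=> *.
all: do ?[by left; split | right].
all: by split.
Qed.


Definition tt3 : 'S_3 := tperm i1 i2.

Lemma tt3_vals : [/\ tt3 i0 = i0, tt3 i1 = i2 & tt3 i2 = i1].
Proof. by rewrite /tt3 tpermL tpermR tpermD. Qed.

Lemma loss1 (R : realType) p :
  dotv (lrow R 1) p = qv p i0 + 2%:R * qv p i1 + 3%:R * qv p i2.
Proof. by rewrite dotv_lrow !perm1 /= mul1r. Qed.

Lemma losst (R : realType) p :
  dotv (lrow R tt3) p = qv p i0 + 3%:R * qv p i1 + 2%:R * qv p i2.
Proof. by case: tt3_vals => a b c; rewrite dotv_lrow a b c /= mul1r. Qed.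

Lemma loss_ge (R : realType) (u : 'S_3) (p : 'rV[R]_D8) :
  let x := qv p i0 in let y := qv p i1 in let z := qv p i2 in
  [/\ (y <= x -> z <= y -> x + 2%:R * y + 3%:R * z <= dotv (lrow R u) p),
      (z <= x -> y <= z -> x + 3%:R * y + 2%:R * z <= dotv (lrow R u) p) &
      (y < x -> z = y -> dotv (lrow R u) p <= x + 2%:R * y + 3%:R * z ->
         nat_of_ord (u i0) = 0%N)].
Proof.
move=> x y z; rewrite dotv_lrow -/x -/y -/z.
have [|[|[|[|[|]]]]] := perm3_vals u; case=> -> -> ->; split=> //= *; first [done | exfalso; lra | lra].
Qed.

Lemma cell1 (R : realType) (p : 'rV[R]_D8) : simplex p -> qv p i1 <= qv p i0 -> qv p i2 <= qv p i1 ->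
  cell 1 p.
Proof.
move=> sp h1 h2; split=> // u; rewrite loss1; by case: (loss_ge u p) => H _ _; apply: H.
Qed.

Lemma cellt (R : realType) (p : 'rV[R]_D8) : simplex p -> qv p i2 <= qv p i0 -> qv p i1 <= qv p i2 ->
  cell tt3 p.
Proof.
move=> sp h1 h2; split=> // u; rewrite losst; by case: (loss_ge u p) => _ H _; apply: H.
Qed.


Lemma row_free_sel (F : fieldType) e d (A : 'M[F]_(e, d)) (c : 'I_e -> 'I_d) (a : F) :
  a != 0 -> (forall i k, A i (c k) = (i == k)%:R * a) -> row_free A.
Proof.
move=> a0 HA; apply/row_freeP; exists (\matrix_(j, k) ((j == c k)%:R / a)).
apply/matrixP => i k; rewrite [LHS]mxE (bigD1 (c k)) // big1 => [|j /negbTE nj].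
  by rewrite !mxE eqxx HA mulr1n mul1r mulfK //= addr0.
by rewrite mxE nj mul0r mulr0.
Qed.

Lemma aff_sel (F : fieldType) d e (P : 'I_e.+1 -> 'rV[F]_d) (c : 'I_e -> 'I_d) (a : F) :
  a != 0 -> (forall i k, (P (lift ord0 i) - P ord0) 0 (c k) = (i == k)%:R * a) ->
  aff_indep P.
Proof.
move=> a0 H; apply: (row_free_sel (c := c) a0) => i k; by rewrite mxE H.
Qed.

Lemma nrf (F : fieldType) r d p (M : 'M[F]_(r, d)) (W : 'M_(d, p)) :
  M *m W = 0 -> (d - \rank W < r)%N -> ~~ row_free M.
Proof.
move=> MW lt; apply/negP => /eqP rM.
have : (M <= kermx W)%MS by apply/sub_kermxP.
move/mxrankS; rewrite mxrank_ker rM => h.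
by move: (leq_ltn_trans h lt); rewrite ltnn.
Qed.

Lemma dim_upper (F : fieldType) d (S : 'rV[F]_d -> Prop) e p (W : 'M[F]_(d, p)) :
  (forall x y, S x -> S y -> (x - y) *m W = 0) -> (d - \rank W < e.+1)%N ->
  ~ (exists P : 'I_e.+2 -> 'rV[F]_d, (forall i, S (P i)) /\ aff_indep P).
Proof.
move=> HS lt [P [SP ai]]; move: ai; apply/negP; apply: (nrf (W := W)) lt.
apply/row_matrixP => i; rewrite row_mul rowK row0; exact: HS.
Qed.


Definition ev (R : realType) (a : nat) : 'rV[R]_D8 := \row_j ((j : nat) == a)%:R.

Ltac crunch := rewrite /qv ?big_ord_recl ?big_ord0 !mxE /=; lra.
Ltac case8 i := case: i => [[|[|[|[|[|[|[|[|//]]]]]]]] ?].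

Lemma simplex_W (R : realType) (x y : 'rV[R]_D8) : simplex x -> simplex y ->
  (x - y) *m (const_mx 1 : 'M[R]_(D8, 1)) = 0.
Proof.
move=> [_ sx] [_ sy]; apply/matrixP => i k; rewrite [i]ord1 !mxE.
rewrite (eq_bigr (fun j => x 0 j - y 0 j)); last by move=> j _; rewrite !mxE mulr1.
by rewrite sumrB sx sy subrr.
Qed.

Lemma rank_const1 (R : realType) : \rank (const_mx 1 : 'M[R]_(D8, 1)) = 1%N.
Proof.
apply/eqP; rewrite eqn_leq rank_leq_col /= lt0n mxrank_eq0.
apply/negP => /eqP/matrixP/(_ ord0 ord0); rewrite !mxE => /eqP; by rewrite oner_eq0.
Qed.

Definition Pfam (R : realType) (b : 'rV[R]_D8) (i : 'I_D8) : 'rV[R]_D8 :=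
  b + (1/8) *: (ev R i - ev R 0).

Definition ba (R : realType) : 'rV[R]_D8 := (1/2) *: ev R 0 + (1/4) *: ev R 1 + (1/4) *: ev R 3.
Definition bb (R : realType) : 'rV[R]_D8 := (1/2) *: ev R 0 + (1/4) *: ev R 1 + (1/4) *: ev R 5.

Lemma Pfam_aff (R : realType) (b : 'rV[R]_D8) : aff_indep (Pfam b).
Proof.
apply: (aff_sel (c := fun k : 'I_((nadv 2).-1) => lift ord0 k) (a := 1/8)).
  by rewrite div1r invr_eq0 pnatr_eq0.
move=> i k; rewrite !mxE !lift0 eqSS /=.
have e : (i == k :> 'I_D8.-1) = (nat_of_ord k == nat_of_ord i) by rewrite eq_sym.
rewrite e; case: (nat_of_ord k == nat_of_ord i) => /=; lra.
Qed.


Definition sv (R : realType) (p : 'rV[R]_D8) : R := \sum_(j < D8) p 0 j.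

Lemma qvD (R : realType) (p p' : 'rV[R]_D8) k : qv (p + p') k = qv p k + qv p' k.
Proof. rewrite /qv -big_split; apply: eq_bigr => j _; by rewrite mxE mulrDl. Qed.
Lemma qvB (R : realType) (p p' : 'rV[R]_D8) k : qv (p - p') k = qv p k - qv p' k.
Proof. rewrite /qv -sumrB; apply: eq_bigr => j _; by rewrite !mxE mulrBl. Qed.
Lemma qvZ (R : realType) (c : R) (p : 'rV[R]_D8) k : qv (c *: p) k = c * qv p k.
Proof. rewrite /qv mulr_sumr; apply: eq_bigr => j _; by rewrite mxE mulrA. Qed.
Lemma svD (R : realType) (p p' : 'rV[R]_D8) : sv (p + p') = sv p + sv p'.
Proof. rewrite /sv -big_split; apply: eq_bigr => j _; by rewrite mxE. Qed.
Lemma svB (R : realType) (p p' : 'rV[R]_D8) : sv (p - p') = sv p - sv p'.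
Proof. rewrite /sv -sumrB; apply: eq_bigr => j _; by rewrite !mxE. Qed.
Lemma svZ (R : realType) (c : R) (p : 'rV[R]_D8) : sv (c *: p) = c * sv p.
Proof. rewrite /sv mulr_sumr; apply: eq_bigr => j _; by rewrite mxE. Qed.

Lemma qv_ev (R : realType) (a : 'I_D8) k : qv (ev R a) k = (radv a k)%:R.
Proof.
rewrite /qv (bigD1 a) //= big1 => [|j nj]; first by rewrite mxE eqxx mul1r addr0.
by rewrite mxE (negbTE (nj : nat_of_ord j != nat_of_ord a)) mul0r.
Qed.
Lemma sv_ev (R : realType) (a : 'I_D8) : sv (ev R a) = 1.
Proof.
rewrite /sv (bigD1 a) //= big1 => [|j nj]; first by rewrite mxE eqxx addr0.
by rewrite mxE (negbTE (nj : nat_of_ord j != nat_of_ord a)).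
Qed.

Definition o8 (a : nat) (H : (a < 8)%N) : 'I_D8 := Ordinal H.
Lemma ev_o8 (R : realType) a (H : (a < 8)%N) : ev R a = ev R (o8 H).
Proof. by []. Qed.

Lemma qv_ev' (R : realType) (a : nat) k : (a < 8)%N -> qv (ev R a) k = (odd (a %/ 2 ^ k))%:R.
Proof. move=> H; exact: (qv_ev R (o8 H)). Qed.
Lemma sv_ev' (R : realType) (a : nat) : (a < 8)%N -> sv (ev R a) = 1.
Proof. move=> H; exact: (sv_ev R (o8 H)). Qed.

Lemma b01 (b : bool) (R : realType) : 0 <= (b%:R : R) <= 1.
Proof. by case: b => /=; rewrite ?lexx ?ler01. Qed.

Lemma ev_ge0 (R : realType) a j : 0 <= ev R a 0 j.
Proof. by rewrite mxE ler0n. Qed.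

Lemma radv0 k : radv (o8 (isT : (0 < 8)%N)) k = false.
Proof. by rewrite /radv /= div0n. Qed.

Lemma qv_Pfam (R : realType) (b : 'rV[R]_D8) i k :
  qv (Pfam b i) k = qv b k + 1/8 * (radv i k)%:R.
Proof.
rewrite /Pfam qvD qvZ qvB !qv_ev (qv_ev R (o8 (isT : (0 < 8)%N))) radv0 /=.
by rewrite subr0.
Qed.

Lemma Pfam_simplex (R : realType) (b : 'rV[R]_D8) i :
  (forall j, 0 <= b 0 j) -> (forall j, (nat_of_ord j == 0)%N -> 1/8 <= b 0 j) ->
  sv b = 1 -> simplex (Pfam b i).
Proof.
move=> b0 b1 sb; split.
  move=> j; rewrite !mxE; have := b0 j; have := b01 (nat_of_ord j == i) R.
  case E: (nat_of_ord j == 0)%N => /=.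
    have := b1 j E; lra.
  lra.
rewrite -/(sv _) /Pfam svD svZ svB sv_ev (sv_ev R (o8 (isT : (0 < 8)%N))) sb; lra.
Qed.

Lemma ba_ok (R : realType) : [/\ forall j, 0 <= ba R 0 j,
   forall j, (nat_of_ord j == 0)%N -> 1/8 <= ba R 0 j & sv (ba R) = 1].
Proof.
split.
- move=> j; rewrite !mxE; have := b01 (nat_of_ord j == 0) R;
  have := b01 (nat_of_ord j == 1) R; have := b01 (nat_of_ord j == 3) R; lra.
- by move=> j /eqP E; rewrite !mxE E /=; lra.
- rewrite /ba !svD !svZ !sv_ev' //; lra.
Qed.

Lemma bb_ok (R : realType) : [/\ forall j, 0 <= bb R 0 j,
   forall j, (nat_of_ord j == 0)%N -> 1/8 <= bb R 0 j & sv (bb R) = 1].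
Proof.
split.
- move=> j; rewrite !mxE; have := b01 (nat_of_ord j == 0) R;
  have := b01 (nat_of_ord j == 1) R; have := b01 (nat_of_ord j == 5) R; lra.
- by move=> j /eqP E; rewrite !mxE E /=; lra.
- rewrite /bb !svD !svZ !sv_ev' //; lra.
Qed.

Lemma qv_ba (R : realType) : [/\ qv (ba R) i0 = 1/2, qv (ba R) i1 = 1/4 & qv (ba R) i2 = 0].
Proof.
rewrite /ba !qvD !qvZ !qv_ev' //=; split; lra.
Qed.

Lemma qv_bb (R : realType) : [/\ qv (bb R) i0 = 1/2, qv (bb R) i1 = 0 & qv (bb R) i2 = 1/4].
Proof.
rewrite /bb !qvD !qvZ !qv_ev' //=; split; lra.
Qed.

Lemma pareto1 (R : realType) : @pareto R 2 1.
Proof.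
split.
  exists (Pfam (ba R)); split; last exact: Pfam_aff.
  move=> i; case: (ba_ok R) => h1 h2 h3; case: (qv_ba R) => q0 q1 q2.
  have := b01 (@radv 2 i i0) R; have := b01 (@radv 2 i i1) R; have := b01 (@radv 2 i i2) R.
  move=> r2 r1 r0.
  apply: cell1; rewrite ?qv_Pfam ?q0 ?q1 ?q2; first exact: Pfam_simplex; lra.
apply: (dim_upper (W := (const_mx 1 : 'M[R]_(D8, 1)))); last by rewrite rank_const1.
move=> x y [sx _] [sy _]; exact: simplex_W.
Qed.

Lemma paretot (R : realType) : @pareto R 2 tt3.
Proof.
split.
  exists (Pfam (bb R)); split; last exact: Pfam_aff.
  move=> i; case: (bb_ok R) => h1 h2 h3; case: (qv_bb R) => q0 q1 q2.
  have := b01 (@radv 2 i i0) R; have := b01 (@radv 2 i i1) R; have := b01 (@radv 2 i i2) R.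
  move=> r2 r1 r0.
  apply: cellt; rewrite ?qv_Pfam ?q0 ?q1 ?q2; first exact: Pfam_simplex; lra.
apply: (dim_upper (W := (const_mx 1 : 'M[R]_(D8, 1)))); last by rewrite rank_const1.
move=> x y [sx _] [sy _]; exact: simplex_W.
Qed.


Definition wv (R : realType) : 'rV[R]_D8 := lrow R 1 - lrow R tt3.
Definition WW (R : realType) : 'M[R]_(D8, 2) :=
  \matrix_(j, k) (1 + (if nat_of_ord k == 0%N then 1 else -1) * wv R 0 j).

Lemma wv_val (R : realType) : wv R 0 (o8 (isT : (4 < 8)%N)) = 1 /\ wv R 0 (o8 (isT : (2 < 8)%N)) = -1.
Proof.
case: tt3_vals => a b c.
rewrite /wv !mxE !sum3 !perm1 a b c /=; split; lra.
Qed.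

Lemma rank_WW (R : realType) : \rank (WW R) = 2%N.
Proof.
rewrite -mxrank_tr; apply/eqP.
apply: (row_free_sel (c := fun k : 'I_2 => if nat_of_ord k == 0%N then o8 (isT : (4 < 8)%N)
                                     else o8 (isT : (2 < 8)%N)) (a := 2)).
  by rewrite pnatr_eq0.
case: (wv_val R) => w4 w2.
move=> i k; rewrite mxE [WW _ _ _]mxE.
case: i => [[|[|//]] ?]; case: k => [[|[|//]] ?] /=; rewrite ?w4 ?w2; lra.
Qed.

Lemma sum_W (R : realType) (x y : 'rV[R]_D8) (s : R) :
  \sum_(j < D8) (x - y) 0 j * (1 + s * wv R 0 j) =
  (sv x - sv y) + s * ((dotv (lrow R 1) x - dotv (lrow R tt3) x)
                     - (dotv (lrow R 1) y - dotv (lrow R tt3) y)).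
Proof.
rewrite /sv /dotv -!sumrB mulr_sumr -big_split; apply: eq_bigr => j _.
rewrite /wv !mxE /=; ring.
Qed.

Lemma inter_W (R : realType) (x y : 'rV[R]_D8) :
  cell 1 x /\ cell tt3 x -> cell 1 y /\ cell tt3 y -> (x - y) *m WW R = 0.
Proof.
move=> [[sx hx1] [_ hxt]] [[sy hy1] [_ hyt]].
have ex : dotv (lrow R 1) x = dotv (lrow R tt3) x by apply/eqP; rewrite eq_le hx1 hxt.
have ey : dotv (lrow R 1) y = dotv (lrow R tt3) y by apply/eqP; rewrite eq_le hy1 hyt.
apply/matrixP => i k; rewrite [i]ord1 !mxE.
rewrite (eq_bigr (fun j => (x - y) 0 j * (1 + (if nat_of_ord k == 0%N then 1 else -1) * wv R 0 j)));
  last by move=> j _; rewrite [WW R j k]mxE.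
rewrite sum_W ex ey /sv; case: sx => _ ->; case: sy => _ ->; rewrite !subrr; ring.
Qed.

Definition bc (R : realType) : 'rV[R]_D8 :=
  (1/2) *: ev R 0 + (1/4) *: ev R 1 + (1/8) *: ev R 5 + (1/8) *: ev R 3.

Definition dir (R : realType) (i : nat) : 'rV[R]_D8 :=
  match i with
  | 1 => ev R 1 - ev R 0
  | 2 => ev R 6 - ev R 0
  | 3 => ev R 7 - ev R 0
  | 4 => ev R 2 + ev R 5 - 2%:R *: ev R 0
  | 5 => ev R 3 + ev R 5 - 2%:R *: ev R 0
  | 6 => ev R 4 - ev R 5
  | _ => 0
  end.

Definition Pc (R : realType) (i : 'I_7) : 'rV[R]_D8 := bc R + (1/16) *: dir R i.

Lemma qv0 (R : realType) k : qv (0 : 'rV[R]_D8) k = 0.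
Proof. by rewrite /qv big1 // => j _; rewrite mxE mul0r. Qed.
Lemma sv0 (R : realType) : sv (0 : 'rV[R]_D8) = 0.
Proof. by rewrite /sv big1 // => j _; rewrite mxE. Qed.

Lemma svN (R : realType) (p : 'rV[R]_D8) : sv (- p) = - sv p.
Proof. by rewrite -scaleN1r svZ mulN1r. Qed.
Lemma qvN (R : realType) (p : 'rV[R]_D8) k : qv (- p) k = - qv p k.
Proof. by rewrite -scaleN1r qvZ mulN1r. Qed.

Lemma Pc_cells (R : realType) i : cell 1 (Pc R i) /\ cell tt3 (Pc R i).
Proof.
have sp : simplex (Pc R i).
  split.
    move=> j; case: i => [[|[|[|[|[|[|[|//]]]]]]] ?];
    case: j => [[|[|[|[|[|[|[|[|//]]]]]]]] ?]; rewrite !mxE /=; lra.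
  rewrite -/(sv _) /Pc /bc; case: i => [[|[|[|[|[|[|[|//]]]]]]] ?];
  rewrite /= ?(svD, svB, svN, svZ, sv0, scaler0) ?sv_ev' //; lra.
have [q0 [q1 q2]] : qv (Pc R i) i1 <= qv (Pc R i) i0 /\
    qv (Pc R i) i2 <= qv (Pc R i) i1 /\ qv (Pc R i) i1 <= qv (Pc R i) i2.
  clear sp; rewrite /Pc /bc; case: i => [[|[|[|[|[|[|[|//]]]]]]] ?];
  rewrite /= ?(qvD, qvB, qvN, qvZ, qv0, scaler0) ?qv_ev' //=; lra.
split; [exact: cell1 | apply: cellt => //; lra].
Qed.

Definition cc (k : 'I_6) : 'I_D8 :=
  match nat_of_ord k with
  | 0 => o8 (isT : (1 < 8)%N)
  | 1 => o8 (isT : (6 < 8)%N)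
  | 2 => o8 (isT : (7 < 8)%N)
  | 3 => o8 (isT : (2 < 8)%N)
  | 4 => o8 (isT : (3 < 8)%N)
  | _ => o8 (isT : (4 < 8)%N)
  end.

Lemma Pc_aff (R : realType) : aff_indep (Pc R).
Proof.
apply: (aff_sel (c := cc) (a := 1/16)); first by rewrite div1r invr_eq0 pnatr_eq0.
move=> i k; case: i => [[|[|[|[|[|[|//]]]]]] ?]; case: k => [[|[|[|[|[|[|//]]]]]] ?];
rewrite !mxE /=; lra.
Qed.

Lemma inter_dim (R : realType) :
  has_dim (fun p : 'rV[R]_D8 => cell 1 p /\ cell tt3 p) (nadv 2).-2.
Proof.
split.
  exists (Pc R); split; [exact: Pc_cells | exact: Pc_aff].
apply: (@dim_upper R D8 (fun p : 'rV[R]_D8 => cell 1 p /\ cell tt3 p) 6 2 (WW R)); last by rewrite rank_WW.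
move=> x y; exact: inter_W.
Qed.

Lemma neigh (R : realType) : neighbors R 1 tt3.
Proof. split; [exact: pareto1 | split; [exact: paretot | exact: inter_dim]]. Qed.


Lemma perm_eq3 (u v : 'S_3) : nat_of_ord (u i0) = v i0 -> nat_of_ord (u i1) = v i1 ->
  nat_of_ord (u i2) = v i2 -> u = v.
Proof.
move=> h0 h1 h2; apply/permP => x.
case: x => [[|[|[|//]]] Hx]; apply: val_inj => /=.
- by rewrite (_ : Ordinal Hx = i0) //; apply: val_inj.
- by rewrite (_ : Ordinal Hx = i1) //; apply: val_inj.
- by rewrite (_ : Ordinal Hx = i2) //; apply: val_inj.
Qed.

Lemma charN (R : realType) (k : 'S_3) :
  k \in [set 1%g; tt3] <-> @in_Nplus R 2 1 tt3 k.
Proof.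
split.
  by rewrite !inE => /orP [/eqP -> | /eqP ->] p [h1 h2].
move=> Hk; have [_ hk] := Hk (Pc R ord0) (Pc_cells R ord0).
have := hk 1%g; rewrite loss1.
have [q0 q1 q2] : [/\ qv (Pc R ord0) i0 = 1/2, qv (Pc R ord0) i1 = 1/8 & qv (Pc R ord0) i2 = 1/8].
  rewrite /Pc /bc /= ?(qvD, qvB, qvN, qvZ, qv0, scaler0) ?qv_ev' //=; split; lra.
case: (loss_ge k (Pc R ord0)) => _ _ H /H {H}.
rewrite q0 q1 q2 => H; have {}H := H ltac:(lra) erefl.
case: tt3_vals => t0 t1 t2.
have [|[|[|[|[|]]]]] := perm3_vals k; case=> a b c; rewrite ?H // in a.
- rewrite !inE; apply/orP; left; apply/eqP; apply: perm_eq3; by rewrite ?perm1.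
- rewrite !inE; apply/orP; right; apply/eqP; apply: perm_eq3; by rewrite ?t0 ?t1 ?t2.
Qed.

Definition vv (R : realType) : 'cV[R]_D8 :=
  \col_j (((j : nat) == 2%N)%:R - ((j : nat) == 4%N)%:R).

Lemma sum_pick (R : realType) (f : 'I_D8 -> R) (a : 'I_D8) :
  \sum_j f j * ((j : nat) == a)%:R = f a.
Proof.
rewrite (bigD1 a) //= big1 => [|j nj]; first by rewrite eqxx mulr1 addr0.
by rewrite (negbTE (nj : nat_of_ord j != nat_of_ord a)) mulr0.
Qed.

Lemma mul_vv (R : realType) m (A : 'M[R]_(m, D8)) i :
  (A *m vv R) i 0 = A i (o8 (isT : (2 < 8)%N)) - A i (o8 (isT : (4 < 8)%N)).
Proof.
rewrite mxE (eq_bigr (fun j => A i j * ((j : nat) == 2%N)%:R - A i j * ((j : nat) == 4%N)%:R)).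
  by rewrite sumrB (sum_pick (fun j => A i j) (o8 (isT : (2 < 8)%N)))
       (sum_pick (fun j => A i j) (o8 (isT : (4 < 8)%N))).
by move=> j _; rewrite mxE mulrBr.
Qed.

Lemma sig_v (R : realType) (k : 'S_3) : (k^-1)%g ord0 = ord0 -> signal R k *m vv R = 0.
Proof.
move=> hk; apply/matrixP => a b; rewrite [b]ord1 mul_vv !mxE /feedback hk /=.
by case: (nat_of_ord a == 0%N); rewrite subrr.
Qed.

Lemma not_obs (R : realType) : ~ locally_observable_pair R 1 tt3.
Proof.
move=> H; have := H [set 1%g; tt3] (charN R) => Hs.
have sub : (\sum_(k in [set 1%g; tt3]) <<signal R k>> <= kermx (vv R))%MS.
  apply/sumsmx_subP => k; rewrite !inE => /orP [/eqP -> | /eqP ->]; rewrite genmxE;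
  apply/sub_kermxP; apply: sig_v.
    by rewrite invg1 perm1.
  rewrite /tt3 tpermV tpermD //.
have := submx_trans Hs sub => /sub_kermxP /matrixP /(_ 0 0).
rewrite mul_vv -[lrow R 1 - lrow R tt3]/(wv R); case: (wv_val R) => -> ->; rewrite mxE; lra.
Qed.

Unset Implicit Arguments.

Theorem theorem2 (R : realType) :
  exists s t : 'S_3,
    neighbors R s t /\ ~ locally_observable_pair R s t.
Proof. exists 1%g, tt3; split; [exact: neigh | exact: not_obs]. Qed.
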